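(* Let $f:\mathcal{O}\to\mathcal{F}$ be a scaling map with scaling ratio $q^\lambda$, $\lambda\ge0$, and let $\tilde f:\mathcal{O}\to\mathcal{O}$, $\tilde f(x)=[f(x)]$. Then the normalized Haar measure $\mu$ on $\mathcal{O}$ is $\tilde f$-invariant, i.e. $\mu(\tilde f^{-1}(B))=\mu(B)$ for every Borel set $B\subset\mathcal{O}$.
   Context: $\mathcal{F}$ is a non-Archimedean local field with valuation ring $\mathcal{O}$, maximal ideal $\mathfrak{p}$, $q=\#\mathcal{O}/\mathfrak{p}$, normalized absolute value $|\cdot|_\mathfrak{p}$, prime element $\pi$. Fix representatives $C\subset\mathcal{O}$ of $\mathcal{O}/\mathfrak{p}$ with $0\in C$; writing $x=\sum_{n\ge v}c_n\pi^n$ ($c_n\in C$), $[x]=\sum_{n\ge0}c_n\pi^n$. A map $f:\Omega\to\mathcal{F}$ is scaling with ratio $q^\lambda$ if $|f(x)-f(y)|_\mathfrak{p}=q^\lambda|x-y|_\mathfrak{p}$ for all $x,y\in\Omega$. $\mu$ denotes Haar measure with $\mu(\mathcal{O})=1$. *)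

(* Defs.v *)
From HB Require Import structures.
From mathcomp Require Import all_boot all_order all_algebra.
From mathcomp Require Import all_classical all_reals all_analysis.
Set Implicit Arguments. Unset Strict Implicit. Unset Printing Implicit Defensive.
Import Order.TTheory GRing.Theory Num.Theory.
Local Open Scope classical_set_scope.
Local Open Scope ring_scope.

Section LocalField.
Variables (F : fieldType) (v : F -> int) (pi : F) (C : seq F).

(* v is a (normalized, discrete) valuation on F^x; its value at 0 is
   irrelevant (never used), 0 being treated as having valuation +oo. *)
Definition O_set : set F := [set x | x = 0 \/ (0 <= v x)%R].
Definition p_set : set F := [set x | x = 0 \/ (1 <= v x)%R].
(* closed ball {x | |x - a|_p <= q^(-n)} *)
Definition vball (a : F) (n : int) : set F := [set x | x = a \/ (n <= v (x - a))%R].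

(* F is a non-Archimedean local field with valuation v, prime element pi and
   set of representatives C of O/p (containing 0):
   - v is a discrete valuation, normalized with v pi = 1;
   - F is complete for the valuation topology;
   - C is a finite complete set of representatives of O/p, 0 \in C.
   (Finiteness of the residue field is expressed through the finite list C.) *)
Definition nonarch_local_field : Prop :=
  [/\ (forall x y, x != 0 -> y != 0 -> v (x * y) = v x + v y),
      (forall x y, x != 0 -> y != 0 -> x + y != 0 ->
                     (Order.min (v x) (v y) <= v (x + y))%R),
      pi != 0 /\ v pi = 1,
      (forall u : nat -> F,
         (forall m : int, exists N, forall i j, (N <= i)%N -> (N <= j)%N ->
              vball (u j) m (u i)) ->
         exists l, forall m : int, exists N, forall i, (N <= i)%N -> vball l m (u i))
    & [/\ uniq C, (0 : F) \in C, (forall c, c \in C -> O_set c),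
          (forall c d, c \in C -> d \in C -> p_set (c - d) -> c = d) &
          (forall x, O_set x -> exists2 c, c \in C & p_set (x - c))]].

Definition resq : nat := size C.

Definition absp (R : realType) (x : F) : R :=
  if x == 0 then 0 else (resq%:R : R) `^ (- (v x)%:~R).

Definition scaling (R : realType) (f : F -> F) (lambda : R) : Prop :=
  forall x y, O_set x -> O_set y ->
    absp R (f x - f y) = (resq%:R : R) `^ lambda * absp R (x - y).

(* the "fractional part" sum_{v <= n < 0} c_n pi^n of x: the finite sum with
   digits in C of negative powers of pi whose difference with x lies in O *)
Definition is_negdigitsum (s : F) : Prop :=
  exists (n : nat) (c : nat -> F), (forall k, c k \in C) /\
    s = \sum_(1 <= k < n.+1) c k * pi ^- k.
Definition fracpart (x : F) : F :=
  xget 0 [set s | is_negdigitsum s /\ O_set (x - s)].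
(* [x] = sum_{n >= 0} c_n pi^n  =  x - sum_{n < 0} c_n pi^n *)
Definition intpart (x : F) : F := x - fracpart x.

Definition open_O (U : set F) : Prop :=
  U `<=` O_set /\ forall x, U x -> exists n : int, vball x n `<=` U.
Definition borel_O : set (set F) := <<s O_set, open_O >>.

Definition haar_O (R : realType) (mu : set F -> \bar R) : Prop :=
  [/\ mu set0 = 0%E,
      (forall A, borel_O A -> (0 <= mu A)%E),
      (forall A : nat -> set F, (forall n, borel_O (A n)) -> trivIset setT A ->
         (fun n => \sum_(k < n) mu (A k))%E @ \oo --> mu (\bigcup_n A n)),
      (forall a B, O_set a -> borel_O B -> mu [set a + x | x in B] = mu B)
    & mu O_set = 1%E].

End LocalField.

(* Main.v *)
Require Import Defs.
From HB Require Import structures.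
From mathcomp Require Import all_boot all_order all_algebra.
From mathcomp Require Import all_classical all_reals all_analysis.
From mathcomp Require Import ring lra zify.
Import Order.TTheory GRing.Theory Num.Theory.
Local Open Scope classical_set_scope.
Local Open Scope ring_scope.

Section Val.
Variables (F : fieldType) (v : F -> int) (pi : F) (C : seq F).
Hypothesis hF : nonarch_local_field v pi C.
Let hF' := hF.
Let H1 : forall x y, x != 0 -> y != 0 -> v (x * y) = v x + v y.
Proof. by case: hF'. Qed.

Definition ge (n : int) (x : F) := x = 0 \/ (n <= v x).

Lemma vM x y : x != 0 -> y != 0 -> v (x * y) = v x + v y.
Proof. exact: H1. Qed.
Arguments vM {x y}.
Lemma vU x y : x != 0 -> y != 0 -> x + y != 0 ->
  Order.min (v x) (v y) <= v (x + y).
Proof. by case: hF' => _ h _ _ _; exact: h. Qed.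
Arguments vU {x y}.
Lemma pi_neq0 : pi != 0. Proof. by case: hF' => _ _ []. Qed.
Lemma vpi : v pi = 1. Proof. by case: hF' => _ _ []. Qed.
Lemma v1 : v 1 = 0.
Proof. have o : (1:F) != 0 := oner_neq0 _. have := vM o o; rewrite mulr1 => h; lia. Qed.
Lemma vN x : v (- x) = v x.
Proof.
have m1 : (-1 : F) != 0 by rewrite oppr_eq0 oner_neq0.
have h1 : v (-1) = 0.
  by have := vM m1 m1; rewrite mulrNN mulr1 v1 => h; lia.
have [->|x0] := eqVneq x 0; first by rewrite oppr0.
by rewrite -mulN1r vM // h1 add0r.
Qed.
Lemma vV x : x != 0 -> v x^-1 = - v x.
Proof.
move=> x0; have := vM x0 (invr_neq0 x0); rewrite mulfV // v1 => h; lia.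
Qed.
Lemma vX k : v (pi ^+ k) = k%:Z.
Proof.
elim: k => [|k ih]; first by rewrite expr0 v1.
rewrite exprS vM ?pi_neq0 ?expf_neq0 ?pi_neq0 // ih vpi; lia.
Qed.
Lemma vXV k : v (pi ^- k) = - k%:Z.
Proof. by rewrite vV ?expf_neq0 ?pi_neq0 // vX. Qed.

Lemma ge0 n : ge n 0. Proof. by left. Qed.
Lemma geD n x y : ge n x -> ge n y -> ge n (x + y).
Proof.
move=> [->|hx]; first by rewrite add0r.
move=> [->|hy]; first by rewrite addr0; right.
have [e|e] := eqVneq (x + y) 0; first by left.
have [->|x0] := eqVneq x 0; first by rewrite add0r; right.
have [->|y0] := eqVneq y 0; first by rewrite addr0; right.
right; apply: le_trans (vU x0 y0 e); rewrite le_min hx hy //.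
Qed.
Lemma geN n x : ge n x -> ge n (- x).
Proof. by move=> [->|h]; [left; rewrite oppr0|right; rewrite vN]. Qed.
Lemma geB n x y : ge n x -> ge n y -> ge n (x - y).
Proof. by move=> hx hy; apply: geD => //; apply: geN. Qed.
Lemma geM n m x y : ge n x -> ge m y -> ge (n + m) (x * y).
Proof.
move=> [->|hx]; first by rewrite mul0r; left.
move=> [->|hy]; first by rewrite mulr0; left.
have [->|x0] := eqVneq x 0; first by rewrite mul0r; left.
have [->|y0] := eqVneq y 0; first by rewrite mulr0; left.
by right; rewrite vM // lerD.
Qed.
Arguments geM {n m x y}.
Lemma ge_le n m x : m <= n -> ge n x -> ge m x.
Proof. by move=> mn [->|h]; [left|right; apply: le_trans h]. Qed.
Lemma geX k : ge k%:Z (pi ^+ k). Proof. by right; rewrite vX. Qed.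
Lemma geXV k : ge (- k%:Z) (pi ^- k). Proof. by right; rewrite vXV. Qed.
Lemma geMX n k x : ge n x -> ge (n + k%:Z) (x * pi ^+ k).
Proof. by move=> h; apply: geM h (geX k). Qed.
Lemma geMXV n k x : ge n x -> ge (n - k%:Z) (x * pi ^- k).
Proof. by move=> h; apply: geM h (geXV k). Qed.
Lemma geMX_inv n k x : ge (n + k%:Z) (x * pi ^+ k) -> ge n x.
Proof.
move=> h; have := @geMXV _ k _ h; rewrite -mulrA mulfV ?expf_neq0 ?pi_neq0 // mulr1.
by rewrite addrK.
Qed.
Arguments geMX {n} k {x}.
Arguments geMXV {n} k {x}.
Arguments geMX_inv {n} k {x}.
Lemma not_ge n x : ~ ge n x -> x != 0 /\ v x < n.
Proof.
move=> h; split; first by apply/eqP => e; apply: h; left.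
by rewrite ltNge; apply/negP => e; apply: h; right.
Qed.
Lemma ge1 : ge 0 1. Proof. by right; rewrite v1. Qed.

Lemma OE x : O_set v x <-> ge 0 x. Proof. by []. Qed.
Lemma pE x : p_set v x <-> ge 1 x. Proof. by []. Qed.
Lemma vballE a n x : vball v a n x <-> ge n (x - a).
Proof.
rewrite /vball /ge /=; split => -[h|h].
- by left; rewrite h subrr.
- by right.
- by left; apply/eqP; rewrite -subr_eq0; apply/eqP.
- by right.
Qed.

Lemma hCu : uniq C. Proof. by case: hF' => _ _ _ _ []. Qed.
Lemma hC0 : (0 : F) \in C. Proof. by case: hF' => _ _ _ _ []. Qed.
Lemma hCO c : c \in C -> ge 0 c. Proof. by case: hF' => _ _ _ _ [] _ _ h _ _; apply: h. Qed.
Arguments hCO {c}.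
Lemma hCp c d : c \in C -> d \in C -> ge 1 (c - d) -> c = d.
Proof. by case: hF' => _ _ _ _ [] _ _ _ h _; apply: h. Qed.
Lemma hCex x : ge 0 x -> exists2 c, c \in C & ge 1 (x - c).
Proof. by case: hF' => _ _ _ _ [] _ _ _ _ h; apply: h. Qed.
Arguments hCex {x}.

Lemma geO1 x : ge 1 x -> ge 0 x. Proof. by apply: ge_le. Qed.

Definition dig0 x := xget 0 [set c | c \in C /\ ge 1 (x - c)].
Lemma dig0_C x : dig0 x \in C.
Proof. by rewrite /dig0; case: xgetP => [y _ []|_]; [|exact: hC0]. Qed.
Lemma dig0P x : ge 0 x -> ge 1 (x - dig0 x).
Proof.
move=> x0; have [c cC hc] := hCex x0.
by have [] := @xgetPex _ 0 [set c | c \in C /\ ge 1 (x - c)] (ex_intro _ c (conj cC hc)).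
Qed.
Arguments dig0P {x}.
Lemma dig0_uniq x c : ge 0 x -> c \in C -> ge 1 (x - c) -> dig0 x = c.
Proof.
move=> x0 cC hc; apply: hCp => //; first exact: dig0_C.
have -> : dig0 x - c = (x - c) - (x - dig0 x) by ring.
by apply: geB => //; apply: dig0P.
Qed.

Definition shift x := (x - dig0 x) * pi^-1.
Lemma shiftO x : ge 0 x -> ge 0 (shift x).
Proof.
move=> x0; have := @geMXV _ 1 _ (dig0P x0); rewrite expr1 /shift.
by rewrite (_ : 1 - 1%:Z = 0) //.
Qed.
Arguments shiftO {x}.
Lemma shift_eq x : x = dig0 x + pi * shift x.
Proof.
by rewrite /shift mulrC -mulrA mulVf ?pi_neq0 // mulr1 addrC subrK.
Qed.

Definition it j x := iter j shift x.
Lemma itO j x : ge 0 x -> ge 0 (it j x).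
Proof. by move=> x0; elim: j => //= j ih; apply: shiftO. Qed.
Lemma itS j x : it j.+1 x = it j (shift x).
Proof. by rewrite /it iterSr. Qed.

Lemma expand k x : x = \sum_(j < k) dig0 (it j x) * pi ^+ j + pi ^+ k * it k x.
Proof.
elim: k => [|k ih]; first by rewrite big_ord0 add0r expr0 mul1r.
rewrite big_ord_recr /=.
rewrite {1}ih {1}(shift_eq (it k x)) exprSr; ring.
Qed.

Lemma size_gt0 : (0 < size C)%N.
Proof. by rewrite lt0n size_eq0; apply/eqP => e; move: hC0; rewrite e. Qed.
Definition Q := (size C).-1.+1.
Lemma QE : Q = size C.
Proof. by rewrite /Q prednK // size_gt0. Qed.

Definition dI x : 'I_Q := inord (index (dig0 x) C).
Lemma dIK x : nth 0 C (dI x) = dig0 x.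
Proof.
rewrite /dI inordK; first by rewrite nth_index // dig0_C.
by rewrite prednK ?size_gt0 // index_mem dig0_C.
Qed.
Lemma dI_eq x y : (dI x == dI y) = (dig0 x == dig0 y).
Proof.
apply/eqP/eqP => [e|e]; first by rewrite -dIK e dIK.
by rewrite /dI e.
Qed.

Definition dt k x : {ffun 'I_k -> 'I_Q} := [ffun j : 'I_k => dI (it j x)].

Lemma dt_ge k x y : ge 0 x -> ge 0 y -> dt k x = dt k y -> ge k%:Z (x - y).
Proof.
move=> x0 y0 e.
have ed : forall j : 'I_k, dig0 (it j x) = dig0 (it j y).
  by move=> j; apply/eqP; rewrite -dI_eq; have := congr1 (fun f : {ffun 'I_k -> 'I_Q} => f j) e; rewrite /= !ffunE => ->.
rewrite (expand k x) (expand k y).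
rewrite (eq_bigr (fun j : 'I_k => dig0 (it j y) * pi ^+ j)); last by move=> j _; rewrite ed.
rewrite [X in ge _ X](_ : _ = (it k x - it k y) * pi ^+ k); last by ring.
rewrite -[k%:Z]add0r; apply: geMX.
by apply: geB; apply: itO.
Qed.

Arguments dt_ge {k x y}.
Lemma ge_dig k x y : ge 0 x -> ge 0 y -> ge k%:Z (x - y) ->
  forall j, (j < k)%N -> dig0 (it j x) = dig0 (it j y).
Proof.
elim: k x y => [//|k ih] x y x0 y0 h [_|j jk].
  rewrite /it /=; apply: dig0_uniq => //; first exact: dig0_C.
  have -> : x - dig0 y = (x - y) + (y - dig0 y) by ring.
  apply: geD; last exact: dig0P.
  by apply: ge_le h; rewrite lez_nat.
rewrite !itS; apply: ih => //; try exact: shiftO.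
have -> : shift x - shift y = (x - y) * pi ^- 1.
  rewrite /shift expr1 -mulrBl; congr (_ * _).
  have -> : dig0 x = dig0 y.
    apply: dig0_uniq => //; first exact: dig0_C.
    have -> : x - dig0 y = (x - y) + (y - dig0 y) by ring.
    apply: geD; last exact: dig0P.
    by apply: ge_le h; rewrite lez_nat.
  ring.
by have := @geMXV _ 1 _ h; rewrite (_ : k.+1%:Z - 1%:Z = k%:Z) //; lia.
Qed.

Lemma ge_dt k x y : ge 0 x -> ge 0 y -> ge k%:Z (x - y) -> dt k x = dt k y.
Proof.
move=> x0 y0 h; apply/ffunP => j; rewrite !ffunE; apply/eqP; rewrite dI_eq.
by apply/eqP; apply: (@ge_dig k x y x0 y0 h); exact: ltn_ord.
Qed.


Arguments ge_dt {k x y}.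
Definition S (c : nat -> F) k := \sum_(j < k) c j * pi ^+ j.
Lemma SO c k : (forall i, c i \in C) -> ge 0 (S c k).
Proof.
move=> hc; rewrite /S; apply: (big_ind (ge 0)); first exact: ge0.
  by move=> a b; apply: geD.
move=> j _; have := geM (hCO (hc j)) (geX j); apply: ge_le; rewrite add0r //.
Qed.
Lemma S_succ c k : S c k.+1 = c 0%N + pi * S (fun i => c i.+1) k.
Proof.
rewrite /S big_ord_recl expr0 mulr1; congr (_ + _); rewrite mulr_sumr.
by apply: eq_bigr => j _; rewrite exprS /=; ring.
Qed.
Lemma dig0_S c k : (forall i, c i \in C) -> dig0 (S c k.+1) = c 0%N.
Proof.
move=> hc; apply: dig0_uniq => //; first exact: SO.
rewrite S_succ (addrC (c 0%N)) addrK; have := geM (geX 1) (SO (fun i => c i.+1) k (fun i => hc _)).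
by rewrite expr1 addr0.
Qed.
Lemma shift_S c k : (forall i, c i \in C) -> shift (S c k.+1) = S (fun i => c i.+1) k.
Proof.
move=> hc; rewrite /shift dig0_S // {1}S_succ (addrC (c 0%N)) addrK.
by rewrite [pi * _]mulrC -mulrA mulfV ?pi_neq0 // mulr1.
Qed.
Lemma dig_S j : forall k c, (forall i, c i \in C) -> (j < k)%N ->
  dig0 (it j (S c k)) = c j.
Proof.
elim: j => [|j ih] [|k] c hc // jk; first by rewrite /it /= dig0_S.
by rewrite itS shift_S // ih.
Qed.

Definition tc k (t : {ffun 'I_k -> 'I_Q}) (i : nat) : F :=
  nth 0 C (if insub i is Some j then (t j : nat) else 0%N).
Arguments tc {k}.
Lemma tcC k (t : {ffun 'I_k -> 'I_Q}) i : tc t i \in C.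
Proof.
rewrite /tc; case: insub => [j|]; apply: mem_nth; last exact: size_gt0.
by rewrite -QE ltn_ord.
Qed.
Definition atp k (t : {ffun 'I_k -> 'I_Q}) := S (tc t) k.
Arguments atp {k}.
Lemma atpO k (t : {ffun 'I_k -> 'I_Q}) : ge 0 (atp t).
Proof. exact/SO/tcC. Qed.
Arguments atpO {k}.
Lemma dt_at k (t : {ffun 'I_k -> 'I_Q}) : dt k (atp t) = t.
Proof.
apply/ffunP => j; rewrite ffunE /dI /atp dig_S //; last exact: tcC.
rewrite /tc valK index_uniq ?hCu ?inord_val //.
by rewrite -QE ltn_ord.
Qed.
Arguments dt_at {k}.
Lemma card_dt k : #|{ffun 'I_k -> 'I_Q}| = (Q ^ k)%N.
Proof. by rewrite card_ffun !card_ord. Qed.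

Lemma frac_ex_k k : forall y, ge (- k%:Z) y -> exists c : nat -> F,
  (forall i, c i \in C) /\ ge 0 (y - \sum_(1 <= j < k.+1) c j * pi ^- j).
Proof.
elim: k => [|k ih] y hy.
  exists (fun _ => 0); split => [i|]; first exact: hC0.
  by rewrite big_geq // subr0.
set z := y * pi ^+ k.+1.
have z0 : ge 0 z by have := geMX k.+1 hy; rewrite (_ : - k.+1%:Z + k.+1%:Z = 0) //; lia.
pose c0 := dig0 z.
have hz := dig0P z0.
pose y' := y - c0 * pi ^- k.+1.
have hy' : ge (- k%:Z) y'.
  apply: (@geMX_inv _ k.+1); rewrite (_ : - k%:Z + k.+1%:Z = 1); last by lia.
  rewrite (_ : y' * pi ^+ k.+1 = z - c0) //.
  by rewrite /y' /z mulrBl -mulrA mulVf ?expf_neq0 ?pi_neq0 ?mulr1.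
have [c' [hc' h]] := ih _ hy'.
exists (fun i => if i == k.+1 then c0 else c' i); split.
  by move=> i; case: eqP => _; [exact: dig0_C|exact: hc'].
rewrite big_nat_recr //= eqxx.
rewrite (@eq_big_nat _ _ _ 1 k.+1 _ (fun j => c' j * pi ^- j)); last first.
  by move=> i /andP [_ ik]; rewrite (_ : (i == k.+1) = false) //; apply/negbTE; rewrite neq_ltn ik.
by move: h; rewrite /y' (_ : y - c0 * pi ^- k.+1 - _ = y - (\sum_(1 <= j < k.+1) c' j * pi ^- j + c0 * pi ^- k.+1)) //; ring.
Qed.

Lemma frac_ex y : exists s, is_negdigitsum pi C s /\ O_set v (y - s).
Proof.
have [k hk] : exists k : nat, ge (- k%:Z) y.
  have [->|y0] := eqVneq y 0; first by exists 0%N; left.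
  by exists `|v y|%N; right; lia.
have [c [hc h]] := @frac_ex_k k y hk.
by exists (\sum_(1 <= j < k.+1) c j * pi ^- j); split => //; exists k, c.
Qed.

Lemma intpartO y : ge 0 (intpart v pi C y).
Proof.
rewrite /intpart /fracpart.
have [s hs] := frac_ex y.
by have [] := @xgetPex _ 0 [set s | is_negdigitsum pi C s /\ O_set v (y - s)] (ex_intro _ s hs).
Qed.

Lemma intpart_sub y y' : ge 0 (y - y') ->
  intpart v pi C y - intpart v pi C y' = y - y'.
Proof.
move=> h; rewrite /intpart.
have -> : fracpart v pi C y = fracpart v pi C y'.
  rewrite /fracpart; congr xget; apply/funext => s; apply/propext.
  split => -[hs hO]; split => //.
    have -> : y' - s = (y - s) - (y - y') by ring.
    exact: geB.
  have -> : y - s = (y' - s) + (y - y') by ring.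
  exact: geD.
ring.
Qed.

Lemma size_ge2 : (1 < size C)%N.
Proof.
have d1 : dig0 1 != 0.
  apply/eqP => e; have := dig0P ge1; rewrite e subr0 => -[].
    by apply/eqP; rewrite oner_neq0.
  by rewrite v1.
have h1 := dig0_C 1; have h0 := hC0.
move: h1 h0 d1; case: C => [|a [|b l]] //= ; rewrite !inE => /eqP -> /eqP ->.
by rewrite eqxx.
Qed.

Section Scal.
Variables (R : realType) (f : F -> F) (lambda : R).
Hypothesis hlam : 0 <= lambda.
Hypothesis hf : scaling v C f lambda.

Let q : R := (resq C)%:R.
Lemma q_gt1 : 1 < q.
Proof. by rewrite /q /resq ltr1n size_ge2. Qed.
Lemma q_gt0 : 0 < q. Proof. exact: lt_trans ltr01 q_gt1. Qed.
Lemma powR_injq a b : q `^ a = q `^ b -> a = b.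
Proof.
move=> e; have : q `^ (a - b) == 1.
  rewrite powRB; last by rewrite (gt_eqF q_gt0) implybT.
  by rewrite e divff // gt_eqF // powR_gt0 // q_gt0.
rewrite powR_eq1 (gt_eqF q_gt1) ltNge (ltW q_gt0) /= subr_eq0.
by move/eqP.
Qed.
Lemma abspE x : x != 0 -> absp v C R x = q `^ (- (v x)%:~R).
Proof. by move=> x0; rewrite /absp (negbTE x0). Qed.

Arguments abspE {x}.
Lemma scal_gen x y : ge 0 x -> ge 0 y -> x != y ->
  f x - f y != 0 /\ ((- v (f x - f y))%:~R : R) = lambda - (v (x - y))%:~R.
Proof.
move=> x0 y0 xy; have := hf x y x0 y0.
have d0 : x - y != 0 by rewrite subr_eq0.
rewrite (abspE d0) -powRD; last by rewrite (gt_eqF q_gt0) implybT.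
have [e|fd0] := eqVneq (f x - f y) 0.
  by rewrite e /absp eqxx => /esym/eqP; rewrite powR_eq0 gt_eqF // q_gt0.
rewrite (abspE fd0) => /powR_injq e; split => //.
by rewrite -e intrN.
Qed.

Arguments scal_gen {x y}.
Definition Lz : int := - v (f 1 - f 0).
Lemma lamE : lambda = Lz%:~R.
Proof.
have [_ ] := scal_gen ge1 (ge0 0) (oner_neq0 _).
by rewrite subr0 v1 subr0 => ->.
Qed.
Lemma Lz_ge0 : 0 <= Lz.
Proof. by move: hlam; rewrite lamE ler0z. Qed.
Definition L : nat := `|Lz|%N.
Lemma LE : L%:Z = Lz. Proof. by rewrite /L gez0_abs // Lz_ge0. Qed.

Lemma scal_v x y : ge 0 x -> ge 0 y -> x != y ->
  f x - f y != 0 /\ v (f x - f y) = v (x - y) - L%:Z.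
Proof.
move=> x0 y0 xy; have [h e] := scal_gen x0 y0 xy; split => //.
move: e; rewrite lamE -intrB => /intr_inj; rewrite LE; lia.
Qed.

Arguments scal_v {x y}.
Lemma scal_ge k x y : ge 0 x -> ge 0 y ->
  ge (k + L%:Z) (x - y) <-> ge k (f x - f y).
Proof.
move=> x0 y0; have [->|xy] := eqVneq x y.
  by rewrite !subrr; split => _; left.
have [h e] := scal_v x0 y0 xy.
have d0 : x - y != 0 by rewrite subr_eq0.
split => -[z|z].
- by move: d0; rewrite z eqxx.
- by right; rewrite e; lia.
- by move: h; rewrite z eqxx.
- by right; move: z; rewrite e; lia.
Qed.

Arguments scal_ge {k x y}.
Definition g x := intpart v pi C (f x).
Lemma gO x : ge 0 (g x). Proof. exact: intpartO. Qed.
Lemma g_sub x y : ge 0 x -> ge 0 y -> ge L%:Z (x - y) -> g x - g y = f x - f y.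
Proof.
move=> x0 y0 h; apply: intpart_sub; apply/(@scal_ge 0) => //.
Qed.

Arguments g_sub {x y}.
Variable mu : set F -> \bar R.
Hypothesis hmu : haar_O v mu.

Notation borel := (borel_O v).
Notation OO := (O_set v).

Lemma SA : sigma_algebra OO borel. Proof. exact: smallest_sigma_algebra. Qed.
Lemma borel0 : borel set0. Proof. by case: SA. Qed.
Lemma borelC A : borel A -> borel (OO `\` A). Proof. by case: SA => _ h _; apply: h. Qed.
Lemma borel_bigcup (A : nat -> set F) : (forall n, borel (A n)) -> borel (\bigcup_n A n).
Proof. by case: SA => _ _ h; apply: h. Qed.
Lemma borelO : borel OO.
Proof. by rewrite -(setD0 OO); apply: borelC; exact: borel0. Qed.
Lemma borelU A B : borel A -> borel B -> borel (A `|` B).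
Proof.
move=> hA hB; rewrite -bigcup2E; apply: borel_bigcup => -[|[|n]] //=.
exact: borel0.
Qed.
Lemma borel_sub A : borel A -> A `<=` OO.
Proof.
apply: (@smallest_sub _ _ _ [set X | X `<=` OO]).
  split => //; first by move=> X _; apply: subDsetl.
  by move=> X hX; apply: bigcup_sub => i _; exact: (hX i).
by move=> U [].
Qed.
Lemma borelD A B : borel A -> borel B -> borel (A `\` B).
Proof.
move=> hA hB.
have -> : A `\` B = OO `\` ((OO `\` A) `|` B).
  apply/seteqP; split => x.
    by move=> [xA nB]; split; [exact: borel_sub hA _ xA|move=> [[_ ]|]].
  move=> [xO h]; split.
    by apply: contrapT => nA; apply: h; left.
  by move=> xB; apply: h; right.
by apply: borelC; apply: borelU => //; apply: borelC.
Qed.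
Lemma borel_open U : open_O v U -> borel U.
Proof. exact: sub_sigma_algebra. Qed.

Lemma mu0 : mu set0 = 0%E. Proof. by case: hmu. Qed.
Lemma mu_ge0 A : borel A -> (0 <= mu A)%E. Proof. by case: hmu => _ h _ _ _; apply: h. Qed.
Lemma mu_sigma (A : nat -> set F) : (forall n, borel (A n)) -> trivIset setT A ->
  (fun n => \sum_(k < n) mu (A k))%E @ \oo --> mu (\bigcup_n A n).
Proof. by case: hmu => _ _ h _ _; apply: h. Qed.
Lemma mu_trans a B : ge 0 a -> borel B -> mu [set a + x | x in B] = mu B.
Proof. by case: hmu => _ _ _ h _; apply: h. Qed.
Lemma muO : mu OO = 1%E. Proof. by case: hmu. Qed.

Lemma mu_fin_add n (A : 'I_n -> set F) : (forall k, borel (A k)) ->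
  (forall i j, i != j -> A i `&` A j = set0) ->
  mu (\bigcup_(k in setT) A k) = (\sum_(k < n) mu (A k))%E.
Proof.
move=> bA dA.
pose A' k := if insub k is Some i then A i else set0.
have tA : trivIset setT A'.
  move=> i j _ _; rewrite /A'.
  case: insubP => [i' _ ei|_]; last by rewrite set0I => -[].
  case: insubP => [j' _ ej|_]; last by rewrite setI0 => -[].
  have [ij|ij] := eqVneq i' j'; first by rewrite -ei -ej ij.
  by rewrite dA // => -[].
have bA' : forall k, borel (A' k).
  by move=> k; rewrite /A'; case: insub => [i|]; [exact: bA|exact: borel0].
have h := @mu_sigma A' bA' tA.
have e1 : \bigcup_k A' k = \bigcup_(k in setT) A k.
  apply/seteqP; split => x.
    by move=> [k _]; rewrite /A'; case: insub => [i|] // Ax; exists i.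
  by move=> [k _ Ax]; exists (val k) => //; rewrite /A' valK.
have e2 : (fun m => \sum_(k < m) mu (A' k))%E @ \oo --> (\sum_(k < n) mu (A k))%E.
  apply: cvg_near_cst; exists n => // m /= nm.
  rewrite -(subnKC nm) big_split_ord /= [X in (_ + X)%E]big1; last first.
    by move=> i _; rewrite /A' insubF ?mu0 // ltnNge leq_addr.
  by rewrite adde0; apply: eq_bigr => i _; rewrite /A' /= valK.
by rewrite -e1; apply: (cvg_unique _ h e2).
Qed.

Lemma mu_fin_addT (T : finType) (A : T -> set F) : (forall t, borel (A t)) ->
  (forall t t', t != t' -> A t `&` A t' = set0) ->
  mu (\bigcup_(t in setT) A t) = (\sum_(t : T) mu (A t))%E.
Proof.
move=> bA dA.
rewrite (reindex (@enum_val T predT)) /=; last exact/onW_bij/enum_val_bij.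
rewrite -(@mu_fin_add _ (fun i => A (enum_val i))) //.
- congr mu; apply/seteqP; split => x [t _ h].
    by exists (enum_rank t) => //; rewrite enum_rankK.
  by exists (enum_val t).
- move=> i j ij; apply: dA; apply: contra ij => /eqP e.
  by apply/eqP; apply: (bij_inj (@enum_val_bij T)).
Qed.

Lemma mu_add2 X Y : borel X -> borel Y -> X `&` Y = set0 ->
  mu (X `|` Y) = (mu X + mu Y)%E.
Proof.
move=> bX bY dXY.
pose G := fun i : 'I_2 => if val i == 0%N then X else Y.
have h : mu (\bigcup_(k in setT) G k) = (\sum_(k < 2) mu (G k))%E.
  apply: mu_fin_add; first by move=> k; rewrite /G; case: ifP.
  move=> i j; rewrite /G; case: i => [[|[|i]] //= ?]; case: j => [[|[|j]] //= ?] _.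
  by rewrite setIC.
move: h; rewrite big_ord_recr big_ord_recl big_ord0 /= adde0 => <-.
congr mu; apply/seteqP; split => x.
  by move=> [h|h]; [exists ord0|exists ord_max].
by move=> [i _]; rewrite /G; case: ifP => _ h; [left|right].
Qed.

Definition Bt k (t : {ffun 'I_k -> 'I_Q}) : set F := [set y | ge 0 y /\ dt k y = t].
Definition cyl x k : set F := [set y | ge 0 y /\ dt k y = dt k x].

Lemma cylE x k : ge 0 x -> cyl x k = [set y | ge 0 y /\ ge k%:Z (y - x)].
Proof.
move=> x0; apply/seteqP; split => y [y0 h]; split => //.
  exact: dt_ge.
by apply: ge_dt.
Qed.

Lemma cyl_open x k : ge 0 x -> open_O v (cyl x k).
Proof.
move=> x0; split; first by move=> y [].
move=> y [y0 hy]; exists k%:Z => z /vballE hz.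
have z0 : ge 0 z.
  have -> : z = y + (z - y) by ring.
  by apply: geD => //; apply: ge_le hz.
by split => //; rewrite -hy; apply: ge_dt.
Qed.
Lemma borel_cyl x k : ge 0 x -> borel (cyl x k).
Proof. by move=> x0; apply: borel_open; apply: cyl_open. Qed.

Lemma Bt_cyl k t : Bt k t = cyl (atp t) k.
Proof. by rewrite /cyl dt_at. Qed.

Lemma cyl_trans x k : ge 0 x -> cyl x k = [set x + z | z in cyl 0 k].
Proof.
move=> x0; rewrite !cylE //; last exact: ge0.
apply/seteqP; split => y.
  move=> [y0 h]; exists (y - x); last by ring.
  split; [exact: geB|by rewrite subr0].
move=> [z [z0 h] <-]; split; first exact: geD.
by rewrite subr0 in h; rewrite (_ : x + z - x = z) //; ring.
Qed.

Definition cc k := mu (cyl 0 k).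
Lemma mu_cyl x k : ge 0 x -> mu (cyl x k) = cc k.
Proof.
move=> x0; rewrite cyl_trans // mu_trans //; apply: borel_cyl; exact: ge0.
Qed.

Lemma Bt_disj k (t t' : {ffun 'I_k -> 'I_Q}) : t != t' -> Bt k t `&` Bt k t' = set0.
Proof.
move=> tt'; apply/seteqP; split => // y [[_ e1] [_ e2]].
by move: tt'; rewrite -e1 -e2 eqxx.
Qed.

Lemma partition k : OO = \bigcup_(t in setT) Bt k t.
Proof.
apply/seteqP; split => y.
  by move=> y0; exists (dt k y) => //.
by move=> [t _ []].
Qed.

Lemma Qpos : (0 < Q)%N. Proof. by []. Qed.

Lemma ccE k : cc k = (((Q ^ k)%N%:R : R)^-1)%:E.
Proof.
have e : 1%E = (cc k *+ (Q ^ k))%E.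
  rewrite -muO (partition k) mu_fin_addT; last first.
  - by move=> t t'; apply: Bt_disj.
  - by move=> t; rewrite Bt_cyl; apply: borel_cyl; apply: atpO.
  rewrite (eq_bigr (fun=> cc k)); last by move=> t _; rewrite Bt_cyl mu_cyl //; apply: atpO.
  by rewrite sumr_const card_dt.
have Qk : (0 < Q ^ k)%N by rewrite expn_gt0 Qpos.
have c0 : (0 <= cc k)%E by apply: mu_ge0; apply: borel_cyl; apply: ge0.
move: e c0; case: (cc k) => [r| |] //.
  rewrite -EFin_natmul => -[e2] _; congr EFin.
  apply: (@mulIf _ (Q ^ k)%N%:R); first by rewrite pnatr_eq0 -lt0n.
  rewrite mulVf; first by rewrite mulr_natr -e2.
  by rewrite pnatr_eq0 -lt0n.
by case: (Q ^ k)%N Qk => // m _; rewrite enatmul_pinfty.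
Qed.

Lemma natmulE (x : \bar R) m : (x *+ m)%R = (x *+ m)%E.
Proof. by []. Qed.

Definition pre (B : set F) := [set x | ge 0 x /\ B (g x)].

Lemma pre_Bt_open n t : open_O v (pre (Bt n t)).
Proof.
split; first by move=> x [].
move=> x [x0 [gx0 hx]]; exists (n%:Z + L%:Z) => z /vballE hz.
have z0 : ge 0 z.
  have -> : z = x + (z - x) by ring.
  by apply: geD => //; apply: ge_le hz; lia.
split => //; split; first exact: gO.
rewrite -hx; apply: ge_dt; try exact: gO.
rewrite g_sub //; last by apply: ge_le hz; lia.
by apply/scal_ge.
Qed.

Lemma surj_piece n (s : {ffun 'I_L -> 'I_Q}) (t : {ffun 'I_n -> 'I_Q}) :
  exists x, Bt L s x /\ dt n (g x) = t.
Proof.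
pose x0 := atp s.
pose xu (u : {ffun 'I_n -> 'I_Q}) := x0 + pi ^+ L * atp u.
have xuO u : ge 0 (xu u).
  apply: geD; first exact: atpO.
  by have := geM (geX L) (atpO u); apply: ge_le; lia.
have xux0 u : ge L%:Z (xu u - x0).
  rewrite /xu (_ : x0 + _ - x0 = atp u * pi ^+ L); last by ring.
  by have := geMX L (atpO u); rewrite add0r.
pose phi u := dt n (g (xu u)).
have inj : injective phi.
  move=> u u' /(dt_ge (gO _) (gO _)) h.
  have hL : ge L%:Z (xu u - xu u').
    rewrite (_ : xu u - xu u' = (atp u - atp u') * pi ^+ L); last by rewrite /xu; ring.
    by rewrite -[L%:Z]add0r; apply: geMX; apply: geB; apply: atpO.
  rewrite g_sub // in h.
  have /scal_ge h2 := h; have {h2} h2 := h2 (xuO u) (xuO u').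
  rewrite (_ : xu u - xu u' = (atp u - atp u') * pi ^+ L) in h2; last by rewrite /xu; ring.
  have h3 := geMX_inv L h2.
  by rewrite -(dt_at u) -(dt_at u'); apply: ge_dt => //; apply: atpO.
have [phii h1 h2] := injF_bij inj.
exists (xu (phii t)); split; last by have := h2 t.
split; first exact: xuO.
rewrite -(dt_at s); apply: ge_dt; [exact: xuO|exact: atpO|exact: xux0].
Qed.

Arguments surj_piece {n}.
Lemma piece n (s : {ffun 'I_L -> 'I_Q}) (t : {ffun 'I_n -> 'I_Q}) x :
  Bt L s x -> dt n (g x) = t -> Bt L s `&` pre (Bt n t) = cyl x (n + L).
Proof.
move=> [x0 hs] ht; rewrite cylE //; apply/seteqP; split => y.
  move=> [[y0 ys] [_ [_ yt]]]; split => //.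
  have hL : ge L%:Z (y - x) by apply: dt_ge => //; rewrite ys hs.
  have : ge n%:Z (g y - g x) by apply: dt_ge; try exact: gO; rewrite yt ht.
  by rewrite g_sub // PoszD => /scal_ge => /(_ y0 x0).
move=> [y0 h]; have hL : ge L%:Z (y - x) by apply: ge_le h; rewrite PoszD; lia.
split; first by split => //; rewrite -hs; apply: ge_dt.
split => //; split; first exact: gO.
rewrite -ht; apply: ge_dt; try exact: gO.
by rewrite g_sub //; apply/(@scal_ge n%:Z y x y0 x0); rewrite -PoszD.
Qed.

Arguments piece {n s t x}.
Lemma mu_pre n t : mu (pre (Bt n t)) = mu (Bt n t).
Proof.
have e : pre (Bt n t) = \bigcup_(s in setT) (Bt L s `&` pre (Bt n t)).
  apply/seteqP; split => x.
    by move=> hx; exists (dt L x) => //; split => //; split => //; case: hx.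
  by move=> [s _ []].
rewrite e mu_fin_addT; last first.
- move=> s s' ss'; rewrite setIACA setIid Bt_disj // set0I //.
- move=> s; have [x [hx hg]] := surj_piece s t.
  by rewrite (piece hx hg); apply: borel_cyl; case: hx.
under eq_bigr => s _ do
  (have [x [hx hg]] := surj_piece s t; rewrite (piece hx hg) mu_cyl; last by case: hx).
rewrite sumr_const card_dt Bt_cyl mu_cyl; last exact: atpO.
rewrite !ccE natmulE -EFin_natmul; congr EFin.
rewrite (_ : forall (a : R) m, a *+ m = a * m%:R); last by move=> a m; rewrite mulr_natr.
have q1 : ((Q ^ n)%N%:R : R) != 0 by rewrite pnatr_eq0 -lt0n expn_gt0 Qpos.
have q2 : ((Q ^ L)%N%:R : R) != 0 by rewrite pnatr_eq0 -lt0n expn_gt0 Qpos.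
by rewrite expnD natrM; field; rewrite q1 q2.
Qed.

Definition PP : set (set F) :=
  [set E | E = set0 \/ exists n (t : {ffun 'I_n -> 'I_Q}), E = Bt n t].

Lemma Bt_key n m (t : {ffun 'I_n -> 'I_Q}) (t' : {ffun 'I_m -> 'I_Q}) z :
  (n <= m)%N -> Bt n t z -> Bt m t' z -> Bt n t `&` Bt m t' = Bt m t'.
Proof.
move=> nm [z0 hz] [_ hz']; apply/seteqP; split => y; first by case.
move=> [y0 hy]; split => //; split => //.
have hm : ge m%:Z (y - z) by apply: dt_ge => //; rewrite hy hz'.
rewrite -hz; apply: ge_dt => //; apply: ge_le hm.
by rewrite lez_nat.
Qed.

Lemma PP_setI : setI_closed PP.
Proof.
move=> A B [->|[n [t ->]]]; first by left; rewrite set0I.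
move=> [->|[m [t' ->]]]; first by left; rewrite setI0.
have [[z [hz hz']]|e] := pselect (Bt n t `&` Bt m t' !=set0); last first.
  by left; apply/seteqP; split => // y h; apply: e; exists y.
right; case: (leqP n m) => nm.
  by exists m, t'; apply: Bt_key hz hz'.
by exists n, t; rewrite setIC; apply: Bt_key hz' hz; apply: ltnW.
Qed.

Lemma sigU (T : Type) (D : set T) (G : set (set T)) : sigma_algebra D G ->
  forall A B, G A -> G B -> G (A `|` B).
Proof.
move=> [h0 _ hU] A B hA hB; rewrite -bigcup2E; apply: hU => -[|[|n]] //=.
Qed.

Lemma sPP_sub X : <<s OO, PP>> X -> X `<=` OO.
Proof.
apply: (@smallest_sub _ _ _ [set X | X `<=` OO]).
  split => //; first by move=> Y _; apply: subDsetl.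
  by move=> Y hY; apply: bigcup_sub => i _; exact: (hY i).
by move=> E [->|[n [t ->]]] // y [].
Qed.

Lemma borel_sub_sPP : borel `<=` <<s OO, PP>>.
Proof.
have SAP := smallest_sigma_algebra OO PP.
apply: smallest_sub => // U [UO hU].
pose V n := \big[setU/set0]_(t : {ffun 'I_n -> 'I_Q} | `[< Bt n t `<=` U >]) Bt n t.
have -> : U = \bigcup_n V n.
  apply/seteqP; split => x.
    move=> Ux; have [m hm] := hU x Ux.
    have x0 : ge 0 x := UO x Ux.
    pose n := `|m|%N.
    have sub : Bt n (dt n x) `<=` U.
      move=> y [y0 hy]; apply: hm; apply/vballE.
      by apply: ge_le (dt_ge y0 x0 hy); rewrite /n; lia.
    exists n => //; rewrite /V (bigD1 (dt n x)) /=; last exact/asboolP.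
    by left; split.
  move=> [n _]; rewrite /V; move: x; apply: (big_ind (fun S => S `<=` U)) => //.
    by move=> S1 S2 h1 h2 y [/h1|/h2].
  by move=> t /asboolP.
case: SAP => _ _ hbig; apply: hbig => n; rewrite /V.
apply: (big_ind (<<s OO, PP>>)).
- by case: (smallest_sigma_algebra OO PP).
- by move=> S1 S2; apply: sigU; apply: smallest_sigma_algebra.
- by move=> t _; apply: sub_sigma_algebra; right; exists n, t.
Qed.

Lemma mu_nd (Fs : nat -> set F) : nondecreasing_seq Fs -> (forall i, borel (Fs i)) ->
  (fun n => mu (Fs n)) @ \oo --> mu (\bigcup_n Fs n).
Proof.
move=> ndF bF.
have bA : forall n, borel (seqD Fs n) by move=> [|n] /=; [exact: bF|apply: borelD].
have h := @mu_sigma (seqD Fs) bA (trivIset_seqD ndF).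
rewrite eq_bigcup_seqD in h.
have e : forall n, mu (Fs n) = (\sum_(k < n.+1) mu (seqD Fs k))%E.
  move=> n; rewrite -(@mu_fin_add n.+1 (fun k => seqD Fs k)) //; last first.
    move=> i j ij; apply/seteqP; split => // x [h1 h2].
    have := @trivIset_seqD _ _ ndF i j I I (ex_intro _ x (conj h1 h2)).
    by move/val_inj => e; move: ij; rewrite e eqxx.
  congr mu; rewrite -(nondecreasing_bigsetU_seqD n ndF) -bigcup_mkord.
  apply/seteqP; split => x.
    by move=> [k /= kn h1]; exists (Ordinal kn).
  by move=> [k _ h1]; exists (val k) => //=.
rewrite (_ : (fun n => mu (Fs n)) = (fun n => (\sum_(k < n.+1) mu (seqD Fs k))%E)); last first.
  by apply/funext => n; rewrite e.
by rewrite (cvg_shiftS (fun n => (\sum_(k < n) mu (seqD Fs k))%E)).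
Qed.

Definition DD : set (set F) := [set B | borel B /\ borel (pre B) /\ mu (pre B) = mu B].

Lemma mu_fin B : borel B -> mu B \is a fin_num.
Proof.
move=> bB; rewrite ge0_fin_numE ?mu_ge0 //.
have : mu OO = (mu (OO `\` B) + mu B)%E.
  rewrite -mu_add2 //; first by congr mu; rewrite setDKU //; apply: borel_sub.
  - by apply: borelC.
  - by rewrite setDKI.
rewrite muO => e; apply: (@le_lt_trans _ _ 1%E); last exact: ltry.
by rewrite e; apply: leeDr; apply: mu_ge0; apply: borelC.
Qed.

Lemma lamD : lambda_system OO DD.
Proof.
split.
- by move=> A [bA _]; apply: borel_sub.
- have e : pre OO = OO by apply/seteqP; split => x; [case|move=> x0; split => //; apply: gO].
  by split; [exact: borelO|rewrite e; split => //; exact: borelO].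
- move=> A B BA [bA [pA mA]] [bB [pB mB]].
  have epre : pre (A `\` B) = pre A `\` pre B.
    apply/seteqP; split => x.
      by move=> [x0 [h1 h2]]; split; [by split|move=> [_]].
    by move=> [[x0 h1] h2]; split => //; split => // h; apply: h2.
  have pBA : pre B `<=` pre A by move=> x [x0 h]; split => //; apply: BA.
  split; first exact: borelD.
  rewrite epre; split; first exact: borelD.
  have a1 : mu A = (mu (A `\` B) + mu B)%E.
    rewrite -mu_add2 //; [by rewrite setDKU|exact: borelD|by rewrite setDKI].
  have a2 : mu (pre A) = (mu (pre A `\` pre B) + mu (pre B))%E.
    rewrite -mu_add2 //; [by rewrite setDKU|exact: borelD|by rewrite setDKI].
  have fB := @mu_fin B bB.
  rewrite -(addeK (mu (pre A `\` pre B)) fB) -mB -a2 mA mB a1 addeK //.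
- move=> Fs ndF hFs.
  have epre : pre (\bigcup_n Fs n) = \bigcup_n pre (Fs n).
    by apply/seteqP; split => x; [move=> [x0 [n _ h]]; exists n|move=> [n _ [x0 h]]; split => //; exists n].
  have bF : forall n, borel (Fs n) by move=> n; case: (hFs n).
  have bpF : forall n, borel (pre (Fs n)) by move=> n; case: (hFs n) => _ [].
  split; first exact: borel_bigcup.
  rewrite epre; split; first exact: borel_bigcup.
  have ndp : nondecreasing_seq (fun n => pre (Fs n)).
    move=> i j ij; apply/subsetPset => x [x0 h]; split => //.
    by have := ndF i j ij => /subsetPset; apply.
  have h1 := @mu_nd _ ndp bpF.
  have h2 := @mu_nd _ ndF bF.
  rewrite (_ : (fun n => mu (pre (Fs n))) = (fun n => mu (Fs n))) in h1; last first.
    by apply/funext => n; case: (hFs n) => _ [].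
  exact: (cvg_unique _ h1 h2).
Qed.

Lemma PP_DD : PP `<=` DD.
Proof.
move=> E [->|[n [t ->]]].
  have e : pre set0 = set0 by apply/seteqP; split => x // [].
  by rewrite /DD /= e; split; [exact: borel0|split; [exact: borel0|]].
split; first by rewrite Bt_cyl; apply: borel_cyl; apply: atpO.
split; first by apply: borel_open; apply: pre_Bt_open.
exact: mu_pre.
Qed.

Lemma main_sec B : borel B -> borel (pre B) /\ mu (pre B) = mu B.
Proof.
move=> hB.
have : DD B.
  apply: (@lambda_system_subset F PP PP_setI OO DD lamD PP_DD sPP_sub).
  exact: borel_sub_sPP.
by move=> [_ []].
Qed.

End Scal.

End Val.

Theorem lemma3p1 (R : realType) (F : fieldType) (v : F -> int) (pi : F)
  (C : seq F) (hF : nonarch_local_field v pi C)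
  (mu : set F -> \bar R) (hmu : haar_O v mu)
  (f : F -> F) (lambda : R) (hlam : 0 <= lambda)
  (hf : scaling v C f lambda) :
  forall B, borel_O v B ->
    let ftilde := fun x => intpart v pi C (f x) in
    borel_O v [set x | O_set v x /\ B (ftilde x)] /\
    mu [set x | O_set v x /\ B (ftilde x)] = mu B.
Proof.
move=> B hB ftilde.
exact: (@main_sec F v pi C hF R f lambda hlam hf mu hmu B hB).
Qed.
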